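(* Let $G$ be a connected graph of order at least three. If $D$ is a $\gamma_{\rm cer}$-set of $G$ and $D\cap L_G\neq\emptyset$, then $D$ is not a $\gamma$-set of $G$. Equivalently, if $D$ is a $\gamma_{\rm cer}$-set of $G$ and $\gamma(G)=\gamma_{\rm cer}(G)$, then $L_G\cap D=\emptyset$ and $S_G\subseteq D$.
   Context: All graphs are finite and simple. $L_G$ is the set of leaves (vertices of degree one) of $G$ and $S_G$ is the set of supports (vertices adjacent to a leaf). A set $D\subseteq V_G$ is a dominating set of $G$ if every vertex of $V_G-D$ has a neighbor in $D$; $\gamma(G)$ is the minimum cardinality of a dominating set, and a $\gamma$-set is a dominating set of cardinality $\gamma(G)$. A set $D\subseteq V_G$ is a certified dominating set of $G$ if $D$ is a dominating set of $G$ and every vertex of $D$ has either zero or at least two neighbors in $V_G-D$; $\gamma_{\rm cer}(G)$ is the minimum cardinality of a certified dominating set, and a $\gamma_{\rm cer}$-set is a certified dominating set of cardinality $\gamma_{\rm cer}(G)$. *)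

(* Defs.v *)
From mathcomp Require Import all_boot.
Set Implicit Arguments. Unset Strict Implicit. Unset Printing Implicit Defensive.

Definition simple_graph (T : finType) (e : rel T) : Prop :=
  symmetric e /\ irreflexive e.

Definition connected_graph (T : finType) (e : rel T) : Prop :=
  forall x y : T, connect e x y.

Definition nbhd (T : finType) (e : rel T) (v : T) : {set T} := [set u | e v u].

Definition deg (T : finType) (e : rel T) (v : T) : nat := #|nbhd e v|.

Definition leaves (T : finType) (e : rel T) : {set T} := [set v | deg e v == 1].

Definition supports (T : finType) (e : rel T) : {set T} :=
  [set v | [exists u, (u \in leaves e) && e v u]].

Definition dominating (T : finType) (e : rel T) (D : {set T}) : Prop :=
  forall v, v \notin D -> exists2 u, u \in D & e v u.

Definition certified_dominating (T : finType) (e : rel T) (D : {set T}) : Prop :=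
  dominating e D /\ (forall v, v \in D -> #|nbhd e v :\: D| != 1).

Definition gamma_set (T : finType) (e : rel T) (D : {set T}) : Prop :=
  dominating e D /\ (forall D' : {set T}, dominating e D' -> #|D| <= #|D'|).

Definition gamma_cer_set (T : finType) (e : rel T) (D : {set T}) : Prop :=
  certified_dominating e D /\
  (forall D' : {set T}, certified_dominating e D' -> #|D| <= #|D'|).

(* Main.v *)
Require Import Defs.
From mathcomp Require Import all_boot.

Lemma leaf_nb (T : finType) (e : rel T) l :
  l \in leaves e -> exists u, nbhd e l = [set u].
Proof. by rewrite inE /deg => /cards1P. Qed.

Lemma part1 (T : finType) (e : rel T) :
  simple_graph e -> forall D : {set T}, certified_dominating e D ->
  D :&: leaves e != set0 -> ~ gamma_set e D.
Proof.
move=> [sym irr] D [domD cer] /set0Pn [l]; rewrite inE => /andP [lD lL] [_ gmin].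
have [u Hu] := @leaf_nb _ _ l lL.
have elu : e l u.
  have : u \in nbhd e l by rewrite Hu set11.
  by rewrite inE.
have nb : forall w, e l w -> w = u.
  move=> w elw; have : w \in nbhd e l by rewrite inE.
  by rewrite Hu inE => /eqP.
case uD: (u \in D).
  have dom' : dominating e (D :\ l).
    move=> w; rewrite !inE negb_and negbK => /orP [/eqP -> | wD].
      exists u => //; rewrite !inE uD andbT; apply/eqP => ul.
      by move: elu; rewrite ul irr.
    have [x xD ewx] := domD w wD.
    case xl: (x == l).
      move/eqP: xl => xl; subst x.
      by move: wD; rewrite (nb w) ?uD // sym.
    by exists x => //; rewrite !inE xl xD.
  have := gmin _ dom'.
  by rewrite (cardsD1 l D) lD add1n ltnn.
have := cer l lD.
have -> : nbhd e l :\: D = [set u].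
  rewrite Hu; apply/setP => w; rewrite !inE.
  by case: (w =P u) => [->|]; rewrite ?uD ?andbF.
by rewrite cards1.
Qed.

Theorem lemma2p10 (T : finType) (e : rel T) :
  simple_graph e -> connected_graph e -> 2 < #|T| ->
  forall D : {set T}, gamma_cer_set e D ->
    ((D :&: leaves e != set0 -> ~ gamma_set e D) /\
     ((exists2 D0 : {set T}, gamma_set e D0 & #|D0| = #|D|) ->
        D :&: leaves e = set0 /\ supports e \subset D)).
Proof.
move=> sg _ _ D [cD cmin].
split; first exact: @part1 _ _ sg D cD.
move=> [D0 [_ g0] eq0].
have gD : gamma_set e D by split; [case: cD | move=> D' /g0; rewrite eq0].
have L0 : D :&: leaves e = set0.
  by apply/eqP; apply: contraT => /(@part1 _ _ sg D cD); move/(_ gD).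
split=> //.
apply/subsetP => s; rewrite inE => /existsP [l /andP [lL esl]].
case: sg => sym irr.
have [u Hu] := @leaf_nb _ _ l lL.
have nb : forall w, e l w -> w = u.
  move=> w elw; have : w \in nbhd e l by rewrite inE.
  by rewrite Hu inE => /eqP.
have lD : l \notin D.
  apply/negP => lD; have : l \in D :&: leaves e by rewrite inE lD lL.
  by rewrite L0 inE.
have [x xD elx] := (cD.1) l lD.
by rewrite (nb s) ?(sym l s) // -(nb x elx).
Qed.
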